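(* Let $k\ge 1$, let $\mu_{\text{ns}}\in\mathbb{R}^{d_{\text{ns}}}$, $\Sigma_{\text{ns}}\in\mathbb{S}^{d_{\text{ns}}}_{++}$, and for each $i\in[k]$ let $\mu_i\in\mathbb{R}^{d_{\text{sp}}}$, $\Sigma_i\in\mathbb{S}^{d_{\text{sp}}}_{++}$. In environment $e_i$, data is generated as follows: $y=1$ with probability $\eta$ and $y=-1$ otherwise; conditionally on $Y=y$, ${\mathbf x}_{\text{ns}}\sim\mathcal{N}(y\mu_{\text{ns}},\Sigma_{\text{ns}})$ and ${\mathbf x}_{\text{sp}}\sim\mathcal{N}(y\mu_i,\Sigma_i)$, drawn independently; and ${\mathbf x}=[{\mathbf x}_{\text{ns}},{\mathbf x}_{\text{sp}}]$. Let $\sigma:\mathbb{R}\to(0,1)$ be an invertible function and consider the classifier $f({\mathbf x};{\mathbf w},b)=\sigma({\mathbf w}^\top{\mathbf x}-b)$ with ${\mathbf w}=[{\mathbf w}_{\text{ns}},{\mathbf w}_{\text{sp}}]$ decomposed into coefficients of the invariant and spurious features. If $f$ is calibrated on all $k$ environments, then either ${\mathbf w}=\mathbf{0}$ or there exists $t\neq 0$ such that $$\frac{{\mathbf w}_{\text{ns}}^\top\mu_{\text{ns}}+{\mathbf w}_{\text{sp}}^\top\mu_i}{{\mathbf w}_{\text{ns}}^\top\Sigma_{\text{ns}}{\mathbf w}_{\text{ns}}+{\mathbf w}_{\text{sp}}^\top\Sigma_i{\mathbf w}_{\text{sp}}}=t\quad\text{for all } i\in[k].$$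
   Context: $\mathbb{S}^d_{++}$ denotes the set of $d\times d$ symmetric positive definite matrices, and $[k]=\{1,\dots,k\}$. A classifier $f$ with values in $(0,1)$ is calibrated on the environments $e_1,\dots,e_k$ if for each $i\in[k]$ and every $\alpha$ in the range of $f$ restricted to $e_i$, $P[Y=1\mid f(X)=\alpha, E=e_i]=\alpha$. *)

(* Defs.v *)
From HB Require Import structures.
From mathcomp Require Import all_boot all_order all_algebra.
From mathcomp Require Import all_classical all_reals all_analysis.
Set Implicit Arguments. Unset Strict Implicit. Unset Printing Implicit Defensive.
Import Order.TTheory GRing.Theory Num.Theory.
Import numFieldNormedType.Exports.
Local Open Scope classical_set_scope.
Local Open Scope ring_scope.

Section defs.
Context {R : realType}.

Definition dotv n (u v : 'cV[R]_n) : R := (u^T *m v) 0 0.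

Definition qform n (S : 'M[R]_n) (v : 'cV[R]_n) : R := (v^T *m S *m v) 0 0.

Definition spd n (S : 'M[R]_n) : Prop :=
  S^T = S /\ forall v : 'cV[R]_n, v != 0 -> 0 < qform S v.

Definition gauss (m v : R) : set R -> \bar R :=
  if v == 0 then (\d_m : set R -> \bar R) else normal_prob m (Num.sqrt v).

(* Data model of one environment, on a probability space (Omega, P):
   Y in {1,-1}, P[Y = 1] = eta, and conditionally on Y = y the pair
   (Xns, Xsp) is jointly Gaussian with mean (y mu_ns, y mu_sp) and
   block-diagonal covariance diag(S_ns, S_sp), i.e. Xns ~ N(y mu_ns, S_ns)
   and Xsp ~ N(y mu_sp, S_sp) independently.  Joint Gaussianity is
   expressed by the law of every linear combination a_ns^T Xns + a_sp^T Xsp,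
   stated without dividing by P[Y = y]:
     P[Y = y, a^T X in B] = P[Y = y] * N(y a^T mu, a^T Sigma a)(B). *)
Definition env_model {d} {Omega : measurableType d} (P : probability Omega R)
  (Y : Omega -> R) dns dsp (Xns : Omega -> 'cV[R]_dns) (Xsp : Omega -> 'cV[R]_dsp)
  (eta : R) (mu_ns : 'cV[R]_dns) (S_ns : 'M[R]_dns)
  (mu_sp : 'cV[R]_dsp) (S_sp : 'M[R]_dsp) : Prop :=
  [/\ measurable_fun setT Y,
      (forall w, Y w = 1 \/ Y w = -1),
      (forall j, measurable_fun setT (fun w => Xns w j 0)) /\
      (forall j, measurable_fun setT (fun w => Xsp w j 0)),
      P [set w | Y w = 1] = eta%:E &
      forall y : R, (y = 1 \/ y = -1) ->
      forall (a_ns : 'cV[R]_dns) (a_sp : 'cV[R]_dsp) (B : set R), measurable B ->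
        P ([set w | Y w = y] `&`
           ((fun w => dotv a_ns (Xns w) + dotv a_sp (Xsp w)) @^-1` B))
        = (P [set w | Y w = y] *
           gauss (y * (dotv a_ns mu_ns + dotv a_sp mu_sp))
                 (qform S_ns a_ns + qform S_sp a_sp) B)%E].

(* Calibration of the score F = f(X) : Omega -> (0,1) in one environment:
   P[Y = 1 | F] = F almost surely, i.e. for every Borel B,
   P[Y = 1, F in B] = E[F ; F in B]. *)
Definition calibrated {d} {Omega : measurableType d} (P : probability Omega R)
  (Y : Omega -> R) (F : Omega -> R) : Prop :=
  forall B : set R, measurable B ->
    P ((F @^-1` B) `&` [set w | Y w = 1]) = (\int[P]_(w in F @^-1` B) (F w)%:E)%E.

End defs.

(* Main.v *)
Require Import Defs.
From HB Require Import structures.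
From mathcomp Require Import all_boot all_order all_algebra.
From mathcomp Require Import all_classical all_reals all_analysis.
From mathcomp Require Import measurable_realfun measurable_fun_approximation.
From mathcomp Require Import ring lra.
Import Order.TTheory GRing.Theory Num.Theory.
Import numFieldNormedType.Exports.
Local Open Scope classical_set_scope.
Local Open Scope ring_scope.

Module SubHelpers.
Set Implicit Arguments. Unset Strict Implicit. Unset Printing Implicit Defensive.
Section helpers.
Context {R : realType}.
Notation mu := (@lebesgue_measure R).

Lemma normal_pdf_gt0 (m s x : R) : s != 0 -> 0 < normal_pdf m s x.
Proof.
move=> s0; rewrite normal_pdfE //.
by rewrite mulr_gt0 ?expR_gt0 // normal_peak_gt0.
Qed.

Lemma dens_int (D : set R) (m s p : R) : measurable D -> 0 <= p ->
  (p%:E * normal_prob m s D = \int[mu]_(x in D) (p * normal_pdf m s x)%:E)%E.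
Proof.
move=> mD p0; rewrite /normal_prob -ge0_integralZl_EFin //.
- by move=> x _; rewrite lee_fin normal_pdf_ge0.
- apply/measurable_EFinP; exact: measurable_funS (measurable_normal_pdf m s).
Qed.

Lemma dens_le (D : set R) (m1 m2 s p1 p2 rho : R) : measurable D ->
  0 <= p1 -> 0 <= p2 -> 0 <= rho ->
  (forall x, D x -> p1 * normal_pdf m1 s x <=
     rho * (p1 * normal_pdf m1 s x + p2 * normal_pdf m2 s x)) ->
  (p1%:E * normal_prob m1 s D <=
     rho%:E * (p1%:E * normal_prob m1 s D + p2%:E * normal_prob m2 s D))%E.
Proof.
move=> mD p10 p20 r0 H.
have mf (m p : R) : measurable_fun D (fun x => (p * normal_pdf m s x)%:E).
  apply/measurable_EFinP; apply: measurable_funM => //.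
  exact: measurable_funS (measurable_normal_pdf m s).
have g0 (m p : R) : 0 <= p -> forall x, D x -> (0 <= (p * normal_pdf m s x)%:E)%E.
  by move=> p0 x _; rewrite lee_fin mulr_ge0 // normal_pdf_ge0.
rewrite !dens_int // -ge0_integralD //; [|exact: g0|exact: mf|exact: g0|exact: mf].
rewrite -ge0_integralZl_EFin //; last first.
  by apply: emeasurable_funD; [exact: mf|exact: mf].
  by move=> x Dx; rewrite adde_ge0 //; apply: g0.
under eq_integral do rewrite -EFinD -EFinM.
have mg : measurable_fun D (fun x => (rho * (p1 * normal_pdf m1 s x + p2 * normal_pdf m2 s x))%:E).
  apply/measurable_EFinP; apply: measurable_funM => //.
  apply: measurable_funD; apply: measurable_funM => //;
  exact: measurable_funS (measurable_normal_pdf _ s).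
apply: ge0_le_integral => //; first exact: g0; first exact: mf.
Qed.

Lemma dens_ge (D : set R) (m1 m2 s p1 p2 rho : R) : measurable D ->
  0 <= p1 -> 0 <= p2 -> 0 <= rho ->
  (forall x, D x -> rho * (p1 * normal_pdf m1 s x + p2 * normal_pdf m2 s x)
     <= p1 * normal_pdf m1 s x) ->
  (rho%:E * (p1%:E * normal_prob m1 s D + p2%:E * normal_prob m2 s D) <=
   p1%:E * normal_prob m1 s D)%E.
Proof.
move=> mD p10 p20 r0 H.
have mf (m p : R) : measurable_fun D (fun x => (p * normal_pdf m s x)%:E).
  apply/measurable_EFinP; apply: measurable_funM => //.
  exact: measurable_funS (measurable_normal_pdf m s).
have g0 (m p : R) : 0 <= p -> forall x, D x -> (0 <= (p * normal_pdf m s x)%:E)%E.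
  by move=> p0 x _; rewrite lee_fin mulr_ge0 // normal_pdf_ge0.
rewrite !dens_int // -ge0_integralD //; [|exact: g0|exact: mf|exact: g0|exact: mf].
rewrite -ge0_integralZl_EFin //; last first.
  by apply: emeasurable_funD; [exact: mf|exact: mf].
  by move=> x Dx; rewrite adde_ge0 //; apply: g0.
under eq_integral do rewrite -EFinD -EFinM.
have mg : measurable_fun D (fun x => (rho * (p1 * normal_pdf m1 s x + p2 * normal_pdf m2 s x))%:E).
  apply/measurable_EFinP; apply: measurable_funM => //.
  apply: measurable_funD; apply: measurable_funM => //;
  exact: measurable_funS (measurable_normal_pdf _ s).
apply: ge0_le_integral => //.
- by move=> x _; rewrite lee_fin mulr_ge0 // addr_ge0 // mulr_ge0 // normal_pdf_ge0.
- exact: mf.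
Qed.

Lemma normal_null (D : set R) (m s : R) : measurable D -> s != 0 ->
  normal_prob m s D = 0%E -> mu D = 0%E.
Proof.
move=> mD s0 N0.
have mf : measurable_fun D (fun x => (normal_pdf m s x)%:E).
  apply/measurable_EFinP; exact: measurable_funS (measurable_normal_pdf m s).
have : (\int[mu]_(x in D) `|(normal_pdf m s x)%:E|)%E = 0%E.
  rewrite -N0 /normal_prob; apply: eq_integral => x _.
  by rewrite gee0_abs // lee_fin normal_pdf_ge0.
move/(ae_eq_integral_abs mu mD mf) => [N [mN N0' sub]].
apply/eqP; rewrite -measure_le0 -N0' le_measure ?inE //.
move=> x Dx; apply: sub => /= /(_ Dx) /= [].
by apply/eqP; rewrite gt_eqF // normal_pdf_gt0.
Qed.


Lemma cal_bound d (Omega : measurableType d) (P : probability Omega R)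
  (Y G : Omega -> R) (h : R -> R) (D : set R) (al be : R) :
  measurable_fun setT Y -> measurable_fun setT G -> measurable_fun setT h ->
  (forall w, Y w = 1 \/ Y w = -1) -> injective h -> (forall x, 0 <= h x) ->
  calibrated P Y (fun w => h (G w)) ->
  measurable D -> measurable (h @` D) -> 0 <= al ->
  (forall x, D x -> al <= h x <= be) ->
  (al%:E * (P ([set w | Y w = 1%R] `&` G @^-1` D) + P ([set w | Y w = (-1)%R] `&` G @^-1` D))
    <= P ([set w | Y w = 1%R] `&` G @^-1` D)
    <= be%:E * (P ([set w | Y w = 1%R] `&` G @^-1` D) + P ([set w | Y w = (-1)%R] `&` G @^-1` D)))%E.
Proof.
move=> mY mG mh Ypm hinj h0 cal mD mhD al0 Hab.
have mY1 : measurable [set w | Y w = 1].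
  rewrite -[X in measurable X]setTI; exact: (mY measurableT [set 1%R] (measurable_set1 _)).
have mYN : measurable [set w | Y w = -1].
  rewrite -[X in measurable X]setTI; exact: (mY measurableT [set (-1)%R] (measurable_set1 _)).
have mGD : measurable (G @^-1` D).
  rewrite -[X in measurable X]setTI; exact: (mG measurableT D mD).
have pre : (fun w => h (G w)) @^-1` (h @` D) = G @^-1` D.
  apply/seteqP; split => w /=; last by move=> Dw; exists (G w).
  by move=> [x Dx /hinj <-].
have := cal _ mhD; rewrite pre => cal'.
have split : P (G @^-1` D) = (P ([set w | Y w = 1%R] `&` G @^-1` D) + P ([set w | Y w = (-1)%R] `&` G @^-1` D))%E.
  rewrite -measureU; [|exact: measurableI|exact: measurableI|].
    congr (P _); apply/seteqP; split => w /=.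
      by move=> Gw; case: (Ypm w) => ?; [left|right].
    by case=> -[].
  apply/seteqP; split => w // [[Y1 _] [YN _]].
  have : (1:R) = -1 by rewrite -YN Y1.
  lra.
rewrite -split setIC cal'.
have mhG : measurable_fun (G @^-1` D) (fun w => (h (G w))%:E).
  apply/measurable_EFinP; apply: measurable_funS (measurableT_comp mh mG) => //.
apply/andP; split.
- rewrite -integral_cst //; apply: ge0_le_integral => //.
  by move=> w Dw; rewrite lee_fin; case/andP: (Hab _ Dw).
- rewrite -integral_cst //; apply: ge0_le_integral => //.
  + by move=> w _; rewrite lee_fin.
  + by move=> w Dw; rewrite lee_fin; case/andP: (Hab _ Dw).
Qed.


Lemma lin_cont (f g : R -> R) (c1 c2 : R) : continuous f -> continuous g ->
  continuous (fun x => c1 * f x + c2 * g x).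
Proof.
move=> cf cg x; apply: cvgD; apply: cvgM; (try exact: cvg_cst); [exact: cf|exact: cg].
Qed.

Lemma piece_null d (Omega : measurableType d) (P : probability Omega R)
  (Y G : Omega -> R) (h : R -> R) (eta m1 m2 s : R) (D : set R) (al be rho : R) :
  s != 0 -> measurable_fun setT Y -> measurable_fun setT G -> measurable_fun setT h ->
  (forall w, Y w = 1 \/ Y w = -1) -> injective h -> (forall x, 0 <= h x) ->
  calibrated P Y (fun w => h (G w)) ->
  (forall B, measurable B ->
     P ([set w | Y w = 1] `&` G @^-1` B) = (eta%:E * normal_prob m1 s B)%E) ->
  (forall B, measurable B ->
     P ([set w | Y w = -1] `&` G @^-1` B) = ((1 - eta)%:E * normal_prob m2 s B)%E) ->
  0 <= eta <= 1 ->
  measurable D -> measurable (h @` D) ->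
  (forall x, D x -> al <= h x <= be) -> 0 <= al ->
  ((rho < al /\ forall x, D x -> eta * normal_pdf m1 s x <=
       rho * (eta * normal_pdf m1 s x + (1 - eta) * normal_pdf m2 s x)) \/
   (0 <= rho /\ be < rho /\ forall x, D x ->
       rho * (eta * normal_pdf m1 s x + (1 - eta) * normal_pdf m2 s x)
       <= eta * normal_pdf m1 s x)) ->
  mu D = 0%E.
Proof.
move=> s0 mY mG mh Ypm hinj h0 cal hP1 hP2 /andP[e0 e1] mD mhD Hab al0 Hcase.
have := cal_bound mY mG mh Ypm hinj h0 cal mD mhD al0 Hab.
rewrite hP1 // hP2 //.
set X := (eta%:E * normal_prob m1 s D)%E.
set Z := ((1 - eta)%:E * normal_prob m2 s D)%E.
have X0 : (0 <= X)%E by rewrite /X -hP1 //.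
have Z0 : (0 <= Z)%E by rewrite /Z -hP2 //.
have mY1 : measurable [set w | Y w = 1].
  rewrite -[X in measurable X]setTI; exact: (mY measurableT [set 1%R] (measurable_set1 _)).
have mYN : measurable [set w | Y w = -1].
  rewrite -[X in measurable X]setTI; exact: (mY measurableT [set (-1)%R] (measurable_set1 _)).
have mGD : measurable (G @^-1` D).
  rewrite -[X in measurable X]setTI; exact: (mG measurableT D mD).
have X1 : (X <= 1)%E by rewrite /X -hP1 //; apply: probability_le1; exact: measurableI.
have Z1 : (Z <= 1)%E by rewrite /Z -hP2 //; apply: probability_le1; exact: measurableI.
have Xf : X \is a fin_num by rewrite ge0_fin_numE // (le_lt_trans X1) // ltey.
have Zf : Z \is a fin_num by rewrite ge0_fin_numE // (le_lt_trans Z1) // ltey.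
have Xr : X = (fine X)%:E by rewrite fineK.
have Zr : Z = (fine Z)%:E by rewrite fineK.
move=> /andP[cL cU].
have x0 : 0 <= fine X by rewrite fine_ge0.
have z0 : 0 <= fine Z by rewrite fine_ge0.
have XZ0 : X = 0%E /\ Z = 0%E.
  case: Hcase => [[rl Hle] | [r0 [rb Hge]]].
  - have [r0|rneg] := leP 0 rho; last first.
      have D0 : D = set0.
        apply/seteqP; split => // x Dx; have := Hle x Dx.
        have := normal_pdf_gt0 m1 x s0; have := normal_pdf_gt0 m2 x s0.
        move=> p2 p1 H; have : 0 <= eta * normal_pdf m1 s x by rewrite mulr_ge0 // ltW.
        have : 0 < eta * normal_pdf m1 s x + (1 - eta) * normal_pdf m2 s x.
          have [->|en0] := eqVneq eta 0; first by rewrite mul0r add0r subr0 mul1r.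
          rewrite ltr_pwDl // ?mulr_ge0 ?subr_ge0 ?(ltW p2) // mulr_gt0 //.
          by rewrite lt_def en0.
        nra.
      by split; rewrite /X /Z D0 measure0 mule0.
    have e1' : 0 <= 1 - eta by rewrite subr_ge0.
    have := dens_le mD e0 e1' r0 Hle.
    rewrite -/X -/Z => cR.
    move: cL cR; rewrite Xr Zr -!EFinD -!EFinM !lee_fin => cL cR.
    have : fine X + fine Z = 0 by nra.
    by move=> H; split; [rewrite Xr|rewrite Zr]; congr (_%:E); nra.
  - have e1' : 0 <= 1 - eta by rewrite subr_ge0.
    have := dens_ge mD e0 e1' r0 Hge.
    rewrite -/X -/Z => cR.
    move: cU cR; rewrite Xr Zr -!EFinD -!EFinM !lee_fin => cU cR.
    have : fine X + fine Z = 0 by nra.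
    by move=> H; split; [rewrite Xr|rewrite Zr]; congr (_%:E); nra.
case: XZ0 => X00 Z00.
have [e00|en0] := eqVneq eta 0.
  apply: (normal_null mD s0 (m := m2)).
  by move: Z00; rewrite /Z e00 subr0 mul1e.
apply: (normal_null mD s0 (m := m1)).
move: X00; rewrite /X => /eqP; rewrite mule_eq0 eqe (negbTE en0) /= => /eqP //.
Qed.


Lemma dset_meas (K : set R) (h g : R -> R) (lo hi : R) :
  compact K -> {within K, continuous h} -> measurable_fun setT h -> continuous g ->
  measurable [set x | K x /\ (lo <= h x <= hi) /\ 0 <= g x] /\
  measurable (h @` [set x | K x /\ (lo <= h x <= hi) /\ 0 <= g x]).
Proof.
move=> cK chK mh cg.
have clK : closed K by apply: compact_closed => //; exact: Rhausdorff.
have clI : closed [set y : R | lo <= y <= hi].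
  rewrite (_ : [set y : R | lo <= y <= hi] = [set y | lo <= y] `&` [set y | y <= hi]).
    by apply: closedI; [exact: closed_ge|exact: closed_le].
  by apply/seteqP; split => y /=; [move/andP|move=> [-> ->]].
have clC : closed (g @^-1` [set y : R | 0 <= y]).
  by apply: preimage_closed; [move=> x _; exact: cg|exact: closed_ge].
split.
- rewrite (_ : [set x | _] = K `&` (h @^-1` [set y | lo <= y <= hi]) `&` (g @^-1` [set y : R | 0 <= y])).
    apply: measurableI; last exact: closed_measurable.
    apply: measurableI; first exact: closed_measurable.
    rewrite -[X in measurable X]setTI; apply: mh => //; exact: closed_measurable.
  by apply/seteqP; split => x /=; [move=> [? [? ?]]|move=> [[? ?] ?]].
- rewrite (_ : h @` _ = h @` (K `&` (g @^-1` [set y : R | 0 <= y])) `&` [set y | lo <= y <= hi]).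
    apply: measurableI; last exact: closed_measurable.
    apply: closed_measurable; apply: compact_closed; first exact: Rhausdorff.
    apply: continuous_compact; last exact: compact_closedI.
    exact: continuous_subspaceW chK.
  apply/seteqP; split => y /=.
    by move=> [x [Kx [Ih gx]] <-]; split => //; exists x.
  by move=> [[x [Kx gx] <-] Ih]; exists x.
Qed.


Lemma env_null d (Omega : measurableType d) (P : probability Omega R)
  (Y G : Omega -> R) (h : R -> R) (eta m1 m2 s : R) (K : set R) :
  s != 0 -> measurable_fun setT Y -> measurable_fun setT G -> measurable_fun setT h ->
  (forall w, Y w = 1 \/ Y w = -1) -> injective h -> (forall x, 0 < h x < 1) ->
  calibrated P Y (fun w => h (G w)) ->
  (forall B, measurable B ->
     P ([set w | Y w = 1] `&` G @^-1` B) = (eta%:E * normal_prob m1 s B)%E) ->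
  (forall B, measurable B ->
     P ([set w | Y w = -1] `&` G @^-1` B) = ((1 - eta)%:E * normal_prob m2 s B)%E) ->
  0 <= eta <= 1 ->
  compact K -> {within K, continuous h} ->
  mu.-negligible (K `&` [set x | h x * (eta * normal_pdf m1 s x + (1 - eta) * normal_pdf m2 s x)
                                  != eta * normal_pdf m1 s x]).
Proof.
move=> s0 mY mG mh Ypm hinj h01 cal hP1 hP2 e01 cK chK.
have h0 x : 0 <= h x by case/andP: (h01 x) => /ltW.
have /andP[e0 e1] := e01.
set p1 := normal_pdf m1 s; set p2 := normal_pdf m2 s.
have cp1 : continuous p1 by exact: continuous_normal_pdf.
have cp2 : continuous p2 by exact: continuous_normal_pdf.
have Spos x : 0 < eta * p1 x + (1 - eta) * p2 x.
  have q1 := normal_pdf_gt0 m1 x s0; have q2 := normal_pdf_gt0 m2 x s0.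
  rewrite -/p1 -/p2 in q1 q2.
  have [->|en0] := eqVneq eta 0; first by rewrite mul0r add0r subr0 mul1r.
  rewrite ltr_pwDl // ?mulr_ge0 ?subr_ge0 ?(ltW q2) // mulr_gt0 //.
  by rewrite lt_def en0.
pose N (n : nat) : R := n.+1%:R.
have Npos n : 0 < N n by rewrite ltr0n.
pose rl n j := j%:R / N n - 1 / N n.
pose ru n j := j%:R / N n + 1 / N n + 1 / N n.
pose Dl n j := [set x | K x /\ (j%:R / N n <= h x <= j%:R / N n + 1 / N n) /\
   0 <= (rl n j * eta - eta) * p1 x + (rl n j * (1 - eta)) * p2 x].
pose Du n j := [set x | K x /\ (j%:R / N n <= h x <= j%:R / N n + 1 / N n) /\
   0 <= (eta - ru n j * eta) * p1 x + (- (ru n j * (1 - eta))) * p2 x].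
have jN0 n j : 0 <= j%:R / N n by rewrite divr_ge0 // ltW.
have iN0 n : 0 < 1 / N n by rewrite divr_gt0.
have nDl n j : mu.-negligible (Dl n j).
  have [mD mhD] := @dset_meas K h _ (j%:R / N n) (j%:R / N n + 1 / N n) cK chK mh
    (lin_cont (c1 := rl n j * eta - eta) (c2 := rl n j * (1 - eta)) cp1 cp2).
  apply/negligibleP => //.
  apply: (piece_null (al := j%:R / N n) (be := j%:R / N n + 1 / N n) (rho := rl n j)
     s0 mY mG mh Ypm hinj h0 cal hP1 hP2 e01 mD mhD) => //.
  - by move=> x [_ [] ].
  - left; split; first by rewrite /rl ltrBlDr ltrDl.
    move=> x [_ [_ H]]; rewrite -subr_ge0.
    have -> : rl n j * (eta * normal_pdf m1 s x + (1 - eta) * normal_pdf m2 s x) -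
      eta * normal_pdf m1 s x = (rl n j * eta - eta) * p1 x + rl n j * (1 - eta) * p2 x.
      by rewrite /p1 /p2; ring.
    exact: H.
have nDu n j : mu.-negligible (Du n j).
  have [mD mhD] := @dset_meas K h _ (j%:R / N n) (j%:R / N n + 1 / N n) cK chK mh
    (lin_cont (c1 := eta - ru n j * eta) (c2 := - (ru n j * (1 - eta))) cp1 cp2).
  apply/negligibleP => //.
  apply: (piece_null (al := j%:R / N n) (be := j%:R / N n + 1 / N n) (rho := ru n j)
     s0 mY mG mh Ypm hinj h0 cal hP1 hP2 e01 mD mhD) => //.
  - by move=> x [_ [] ].
  - right; split; first by rewrite /ru !addr_ge0 // ltW.
    split; first by rewrite /ru ltrDl.
    move=> x [_ [_ H]]; rewrite -subr_ge0.
    have -> : eta * normal_pdf m1 s x -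
      ru n j * (eta * normal_pdf m1 s x + (1 - eta) * normal_pdf m2 s x)
      = (eta - ru n j * eta) * p1 x + - (ru n j * (1 - eta)) * p2 x.
      by rewrite /p1 /p2; ring.
    exact: H.
have nB : mu.-negligible (\bigcup_n \bigcup_j (Dl n j `|` Du n j)).
  apply: negligible_bigcup => n; apply: negligible_bigcup => j.
  exact: negligibleU.
apply: negligibleS nB.
move=> x [Kx /= /eqP neq].
have S0 := Spos x.
set S := eta * p1 x + (1 - eta) * p2 x in S0 neq.
set r := eta * p1 x / S.
have aE : eta * p1 x = r * S by rewrite /r divfK // gt_eqF.
have hr : h x != r by apply/eqP => hE; apply: neq; rewrite hE aE.
set dl := `|h x - r|.
have dl0 : 0 < dl by rewrite normr_gt0 subr_eq0.
set n := Num.truncn (2 / dl).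
have F3 : 2 / N n < dl.
  rewrite ltr_pdivrMr // mulrC -ltr_pdivrMr //; exact: truncnS_gt.
have F4 : 2 / N n = 1 / N n + 1 / N n by rewrite -mulrDl.
set j := Num.truncn (h x * N n).
have F1 : j%:R / N n <= h x.
  by rewrite ler_pdivrMr // truncn_le mulr_ge0 // ltW.
have F2 : h x <= j%:R / N n + 1 / N n.
  rewrite -mulrDl natr1 ler_pdivlMr //; apply: ltW; exact: truncnS_gt.
exists n => //; exists j => //.
have [hgr|hlr] := ltP r (h x).
- left; split => //; split => //; first by apply/andP.
  have -> : (rl n j * eta - eta) * p1 x + rl n j * (1 - eta) * p2 x = rl n j * S - eta * p1 x.
    by rewrite /S; ring.
  rewrite aE -mulrBl mulr_ge0 // ?(ltW S0) // subr_ge0 /rl.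
  have : dl = h x - r by rewrite /dl ger0_norm // subr_ge0 ltW.
  move: F1 F2 F3 F4; rewrite /dl.
  move: (h x) (j%:R / N n) (1 / N n) (2 / N n) => hx jN iN tN.
  lra.
- right; split => //; split => //; first by apply/andP.
  have -> : (eta - ru n j * eta) * p1 x + - (ru n j * (1 - eta)) * p2 x = eta * p1 x - ru n j * S.
    by rewrite /S; ring.
  rewrite aE -mulrBl mulr_ge0 // ?(ltW S0) // subr_ge0 /ru.
  have : dl = r - h x.
    rewrite /dl ler0_norm ?opprB // subr_le0 //.
  move: F1 F2 F3 F4; rewrite /dl.
  move: (h x) (j%:R / N n) (1 / N n) (2 / N n) => hx jN iN tN.
  lra.
Qed.

End helpers.

Section H2.
Context {R : realType}.

Lemma pdf_ratio (m v x : R) : 0 < v ->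
  normal_pdf (1 * m) (Num.sqrt v) x =
  normal_pdf ((-1) * m) (Num.sqrt v) x * expR (2 * x * (m / v)).
Proof.
move=> v0; have s0 : Num.sqrt v != 0 by rewrite gt_eqF // sqrtr_gt0.
rewrite !normal_pdfE //=.
transitivity (normal_peak (Num.sqrt v) * (normal_fun ((-1) * m) (Num.sqrt v) x * expR (2 * x * (m / v)))); last exact: mulrA.
congr (_ * _).
rewrite /normal_fun -expRD; congr expR.
rewrite sqr_sqrtr ?ltW //.
have vn0 : v != 0 by rewrite gt_eqF.
field; exact: vn0.
Qed.

Lemma calib_ratio (eta m v x hx : R) : 0 < v -> 0 < hx < 1 ->
  hx * (eta * normal_pdf (1 * m) (Num.sqrt v) x +
        (1 - eta) * normal_pdf ((-1) * m) (Num.sqrt v) x) =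
  eta * normal_pdf (1 * m) (Num.sqrt v) x ->
  0 < eta < 1 /\ expR (2 * x * (m / v)) = hx * (1 - eta) / (eta * (1 - hx)).
Proof.
move=> v0 /andP[h0 h1]; rewrite pdf_ratio //.
have s0 : Num.sqrt v != 0 by rewrite gt_eqF // sqrtr_gt0.
have w0 : 0 < normal_pdf ((-1) * m) (Num.sqrt v) x.
  by rewrite normal_pdfE // mulr_gt0 ?expR_gt0 // normal_peak_gt0.
have E0 : 0 < expR (2 * x * (m / v)) by exact: expR_gt0.
move: w0 E0; move: (normal_pdf _ _ x) (expR _) => w E w0 E0 H.
have H' : (1 - hx) * eta * E = hx * (1 - eta).
  have H1 : ((1 - hx) * eta * E - hx * (1 - eta)) * w = 0.
    transitivity (eta * (w * E) - hx * (eta * (w * E) + (1 - eta) * w)); first by ring.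
    by rewrite H subrr.
  by move/eqP: H1; rewrite mulf_eq0 (gt_eqF w0) orbF subr_eq0 => /eqP.
have eta0 : 0 < eta.
  rewrite ltNge; apply/negP => en.
  have : (1 - hx) * eta * E <= 0.
    by rewrite mulrAC mulr_ge0_le0 // mulr_ge0 // ?subr_ge0 ?ltW.
  have : 0 < hx * (1 - eta) by rewrite mulr_gt0 // subr_gt0 (le_lt_trans en).
  lra.
have eta1 : eta < 1.
  rewrite ltNge; apply/negP => en.
  have : 0 < (1 - hx) * eta * E.
    by rewrite mulr_gt0 // mulr_gt0 // ?subr_gt0 // (lt_le_trans ltr01).
  have : hx * (1 - eta) <= 0 by apply: mulr_ge0_le0; [exact: ltW|rewrite subr_le0].
  lra.
split; first by apply/andP.
rewrite -H'; field.
by rewrite (gt_eqF eta0) andbT subr_eq0 eq_sym (lt_eqF h1).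
Qed.


Notation mu := (@lebesgue_measure R).

Lemma two_points (K N : set R) : measurable K -> mu K != 0%E -> mu.-negligible N ->
  exists x1 x2, K x1 /\ K x2 /\ ~ N x1 /\ ~ N x2 /\ x1 != x2.
Proof.
move=> mK Kpos nN.
case: (pselect (exists x1 x2, K x1 /\ K x2 /\ ~ N x1 /\ ~ N x2 /\ x1 != x2)) => // Hn.
exfalso; move/eqP: Kpos; apply.
suff : mu.-negligible K.
  move=> [M [mM M0 KM]]; apply/eqP; rewrite -measure_le0 -M0 le_measure ?inE //.
case: (pselect (exists x0, K x0 /\ ~ N x0)) => [[x0 [Kx0 Nx0]]|Hn0].
  have nU : mu.-negligible (N `|` [set x0]).
    apply: negligibleU => //; apply/negligibleP => //; exact: lebesgue_measure_set1.
  apply: negligibleS nU => x Kx; case: (pselect (N x)) => [|nb]; [by left|right].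
  apply/eqP; apply/negPn/negP => xx0; apply: Hn; exists x, x0; do 4!split => //.
apply: (negligibleS _ nN) => x Kx.
by case: (pselect (N x)) => // nb; exfalso; apply: Hn0; exists x.
Qed.

Lemma Kpos_lemma (A K : set R) : measurable A -> measurable K -> K `<=` A ->
  mu A = 2%:E -> (mu (A `\` K) < 1)%E -> mu K != 0%E.
Proof.
move=> mA mK KA A2 AK; apply/eqP => K0.
have E : (mu A = mu (A `\` K) + mu K)%E.
  by rewrite -{2}(setIidr KA); exact: measureDI.
move: E; rewrite K0 adde0 A2 => E.
by move: AK; rewrite -E lte_fin; lra.
Qed.

End H2.

Section H3.
Context {R : realType}.

Lemma dotvE n (a u : 'cV[R]_n) : dotv a u = \sum_j a j 0 * u j 0.
Proof. by rewrite /dotv mxE; apply: eq_bigr => j _; rewrite mxE. Qed.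

Lemma measurable_dotv d (T : measurableType d) n (a : 'cV[R]_n) (X : T -> 'cV[R]_n) :
  (forall j, measurable_fun setT (fun w => X w j 0)) ->
  measurable_fun setT (fun w => dotv a (X w)).
Proof.
move=> mX; rewrite (_ : (fun w => _) = (fun w => \sum_j a j 0 * X w j 0)).
  by apply: measurable_sum => j; apply: measurable_funM => //.
by apply/funext => w; rewrite dotvE.
Qed.

Lemma qform0 n (S : 'M[R]_n) : qform S 0 = 0.
Proof. by rewrite /qform mulmx0 mxE. Qed.

Lemma qform_ge0 n (S : 'M[R]_n) v : spd S -> 0 <= qform S v.
Proof.
move=> [_ H]; have [->|vn0] := eqVneq v 0; first by rewrite qform0.
exact/ltW/H.
Qed.


Lemma h_eq_eta (eta hx : R) : 0 < eta < 1 -> 0 < hx < 1 ->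
  hx * (1 - eta) / (eta * (1 - hx)) = 1 -> hx = eta.
Proof.
move=> /andP[e0 e1] /andP[h0 h1] H.
have b0 : eta * (1 - hx) != 0 by rewrite mulf_neq0 // ?gt_eqF // subr_gt0.
have : hx * (1 - eta) = eta * (1 - hx).
  by move/(congr1 (fun z => z * (eta * (1 - hx)))): H; rewrite divfK // mul1r.
lra.
Qed.

End H3.


End SubHelpers.
Import SubHelpers.
Unset Implicit Arguments.

Theorem lemmaS2 (R : realType) (k dns dsp : nat) (hk : (1 <= k)%N)
  (eta : R) (mu_ns : 'cV[R]_dns) (S_ns : 'M[R]_dns)
  (mu : 'I_k -> 'cV[R]_dsp) (S : 'I_k -> 'M[R]_dsp)
  (d : 'I_k -> measure_display) (Omega : forall i : 'I_k, measurableType (d i))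
  (P : forall i : 'I_k, probability (Omega i) R)
  (Y : forall i : 'I_k, Omega i -> R)
  (Xns : forall i : 'I_k, Omega i -> 'cV[R]_dns)
  (Xsp : forall i : 'I_k, Omega i -> 'cV[R]_dsp)
  (sigma : R -> R) (w_ns : 'cV[R]_dns) (w_sp : 'cV[R]_dsp) (b : R) :
  spd S_ns -> (forall i, spd (S i)) ->
  (forall i, env_model (P i) (Y i) (Xns i) (Xsp i) eta mu_ns S_ns (mu i) (S i)) ->
  (* sigma : R -> (0,1) invertible (a bijection onto (0,1)), measurable *)
  (forall z, 0 < sigma z < 1) -> injective sigma ->
  (forall p, 0 < p < 1 -> exists z, sigma z = p) ->
  measurable_fun setT sigma ->
  (* f(x; w, b) = sigma(w^T x - b) is calibrated on all k environments *)
  (forall i, calibrated (P i) (Y i)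
     (fun om => sigma (dotv w_ns (Xns i om) + dotv w_sp (Xsp i om) - b))) ->
  (w_ns = 0 /\ w_sp = 0) \/
  exists t : R, t != 0 /\
    forall i : 'I_k,
      (dotv w_ns mu_ns + dotv w_sp (mu i)) /
      (qform S_ns w_ns + qform (S i) w_sp) = t.
Proof.
move=> spdns spdS env sig01 siginj _ msig cal.
have [[-> ->]|wnz] := pselect (w_ns = 0 /\ w_sp = 0); first by left.
right.
pose m i := dotv w_ns mu_ns + dotv w_sp (mu i).
pose v i := qform S_ns w_ns + qform (S i) w_sp.
have v0 i : 0 < v i.
  rewrite /v; have [wn0|wn0] := eqVneq w_ns 0.
    have [ws0|ws0] := eqVneq w_sp 0; first by exfalso; apply: wnz.
    by rewrite ltr_wpDl ?qform_ge0 //; case: (spdS i) => _ ->.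
  by rewrite ltr_wpDr ?qform_ge0 //; case: spdns => _ ->.
pose h x := sigma (x - b).
have mh : measurable_fun setT h.
  apply: measurableT_comp => //; apply: measurable_funB => //.
have hinj : injective h by move=> x y /siginj /addIr.
have h01 x : 0 < h x < 1 by exact: sig01.
pose A : set R := [set` `[(-1 : R), 1]%R].
have mA : measurable A by exact: measurable_itv.
have finA : (lebesgue_measure A < +oo)%E by rewrite lebesgue_measure_itv /=; case: ifP => _; rewrite ?ltry // -EFinB ltry.
have [K [cK KA KAe chK]] := measurable_almost_continuous mA finA ltr01 (measurable_funS measurableT (subsetT A) mh).
have mK : measurable K by apply: closed_measurable; apply: compact_closed => //; exact: Rhausdorff.
pose bad i := K `&` [set x | h x * (eta * normal_pdf (1 * m i) (Num.sqrt (v i)) x +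
    (1 - eta) * normal_pdf ((-1) * m i) (Num.sqrt (v i)) x) != eta * normal_pdf (1 * m i) (Num.sqrt (v i)) x].
have nbad i : (lebesgue_measure).-negligible (bad i).
  have [mY Ypm [mXns mXsp] PY1 Hlaw] := env i.
  pose G w := dotv w_ns (Xns i w) + dotv w_sp (Xsp i w).
  have mG : measurable_fun setT G.
    by apply: measurable_funD; apply: measurable_dotv.
  have s0 : Num.sqrt (v i) != 0 by rewrite gt_eqF // sqrtr_gt0.
  have vn0 : v i != 0 by rewrite gt_eqF.
  have mY1 : measurable [set w | Y i w = 1].
    rewrite -[X in measurable X]setTI; exact: (mY measurableT [set 1%R] (measurable_set1 _)).
  have PYN : P i [set w | Y i w = -1] = (1 - eta)%:E.
    rewrite (_ : [set w | Y i w = -1] = ~` [set w | Y i w = 1]).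
      by rewrite probability_setC // PY1.
    apply/seteqP; split => w /=.
      by move=> ->; apply/eqP; rewrite eq_sym -subr_eq0 opprK (_ : 1 + 1 = 2%:R) // pnatr_eq0.
    by case: (Ypm w).
  have e01 : 0 <= eta <= 1.
    rewrite -!lee_fin -PY1 measure_ge0 /=; exact: probability_le1.
  apply: (@env_null R _ _ (P i) (Y i) G h eta (1 * m i) ((-1) * m i) (Num.sqrt (v i)) K
    s0 mY mG mh Ypm hinj h01 (cal i) _ _ e01 cK chK).
  - move=> B mB; rewrite Hlaw //; [|by left]; rewrite PY1 /gauss.
    by rewrite -/(m i) -/(v i) (negbTE vn0).
  - move=> B mB; rewrite Hlaw //; [|by right]; rewrite PYN /gauss.
    by rewrite -/(m i) -/(v i) (negbTE vn0).
pose F (n : nat) := if @insub _ (fun j => (j < k)%N) 'I_k n is Some i then bad i else set0.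
have nF : (lebesgue_measure).-negligible (\bigcup_n F n).
  apply: negligible_bigcup => n; rewrite /F; case: insub => [i|] //.
  exact: negligible_set0.
have Fi i x : bad i x -> (\bigcup_n F n) x.
  by move=> bx; exists (val i) => //; rewrite /F valK.
have A2 : lebesgue_measure A = 2%:E.
  rewrite /A lebesgue_measure_itv /=; case: ifP => [_|]; last first.
    by move=> hh; exfalso; move: hh; rewrite lte_fin; have -> : (-1 < 1 :> R) by lra.
  by rewrite -EFinB opprK.
have Kpos := Kpos_lemma mA mK KA A2 KAe.
pose Bad := \bigcup_n F n.
have [x1 [x2 [K1 [K2 [G1 [G2 x12]]]]]] := two_points mK Kpos nF.
have Eq i x : K x -> ~ Bad x ->
    0 < eta < 1 /\ expR (2 * x * (m i / v i)) = h x * (1 - eta) / (eta * (1 - h x)).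
  move=> Kx nB; apply: (@calib_ratio R eta (m i) (v i) x (h x) (v0 i) (h01 x)).
  apply/eqP; apply/negPn/negP => ne; apply: nB; apply: (Fi i); split => //.
pose i0 : 'I_k := Ordinal hk.
exists (m i0 / v i0); split.
  apply/eqP => t0.
  have [ee e1] := Eq i0 x1 K1 G1; have [_ e2] := Eq i0 x2 K2 G2.
  rewrite t0 mulr0 expR0 in e1; rewrite t0 mulr0 expR0 in e2.
  have hx1 := h_eq_eta ee (h01 x1) (esym e1).
  have hx2 := h_eq_eta ee (h01 x2) (esym e2).
  by move/negP: x12; apply; apply/eqP; apply: hinj; rewrite hx1 hx2.
move=> i; change (m i / v i = m i0 / v i0).
have [_ a1] := Eq i x1 K1 G1; have [_ a0] := Eq i0 x1 K1 G1.
have [_ b1] := Eq i x2 K2 G2; have [_ b0] := Eq i0 x2 K2 G2.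
have A1 : 2 * x1 * (m i / v i) = 2 * x1 * (m i0 / v i0) by apply: expR_inj; rewrite a1 a0.
have B1 : 2 * x2 * (m i / v i) = 2 * x2 * (m i0 / v i0) by apply: expR_inj; rewrite b1 b0.
have [x10|x1n0] := eqVneq x1 0.
  have x2n0 : x2 != 0 by rewrite -x10 eq_sym.
  apply: (mulfI (x := 2 * x2)) => //; by rewrite mulf_neq0.
by apply: (mulfI (x := 2 * x1)) => //; rewrite mulf_neq0.
Qed.
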